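(* Let $S$ be a specialisation independent scheduling rule, $G$ and $X$ p-goals, $\gamma$ a substitution and $\underline\tau$ a shifting such that $G\gamma\underline{\tau}+X$ is defined. Suppose there are p-SLD derivations $G\xrightarrow{S,E}Q$ (1) and $G\gamma\underline{\tau}+X\xrightarrow{S,D}R$ (2) via $S$ with $D/(G\gamma\underline{\tau})=E$. Then there exist a substitution $\sigma$ and a shifting $\underline{\rho}$ such that $R/(G\gamma\underline{\tau})=Q\sigma\underline{\rho}$; moreover, $\sigma$ is a renaming if $\gamma$ is a renaming and $D/X$ is empty.
   Context: A p-atom is a pair $a[p]$ of an atom $a$ and a rational priority $p$. A p-goal is a finite set of p-atoms with pairwise distinct priorities, regarded as a list ordered by increasing priority. Substitutions act on atoms and leave priorities unchanged. A clause is $h\leftarrow B$ with $h$ an atom and $B$ a p-goal. For p-goals with no common priority, $F+G=F\cup G$ (merging); $F|G$ denotes $F+G$ when all priorities of $F$ are smaller than those of $G$. A shifting $\underline{\pi}$ is a strictly increasing bijection $\mathbb{Q}\to\mathbb{Q}$ acting on priorities ($G\underline\pi$). Priority derivation step: for a p-goal $a|F$ ($a$ of least priority), clause $c=(h\leftarrow B)$, renaming $\xi$ with $var(a|F)\cap var(c\xi)=\emptyset$, idempotent relevant mgu $\theta$ of $a$ and $h\xi$, and shifting $\underline{\pi}$ with $F$, $B\xi\underline{\pi}$ sharing no priority: $a|F\xrightarrow{c\xi,\theta}(F+B\xi\underline{\pi})\theta$. A p-SLD derivation is a sequence of such steps with each renamed clause $c_j\xi_j$ variable-disjoint from the initial goal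 and all earlier renamed clauses; its template is the sequence of applied clauses. Specialisation/lowering: for $c=(h\leftarrow B)$, a step $a\lambda\underline{\sigma}|(K\lambda\underline{\sigma}+X)\xrightarrow{c}(X+K\lambda\underline{\sigma}+B\xi''\underline{\theta}'')\alpha''$ is a lowering by $X$ of a step $a|K\xrightarrow{c}(K+B\xi'\underline{\theta}')\alpha'$ ($\lambda$ a substitution, $\underline\sigma$ a shifting); it is a congruent lowering by $X$ if some shifting $\underline{\rho}$ has $K\underline{\rho}=K\underline{\sigma}$ and $B\underline{\theta}'\underline{\rho}=B\underline{\theta}''$. Steps are (congruent) lowerings of each other if each is a (congruent) lowering of the other. A set $S$ of steps is complete if (i) whenever some step $G\xrightarrow{c}\cdot$ exists, some step $G\xrightarrow{c}\cdot$ lies in $S$, and (ii) $S$ contains every step that is a congruent lowering of each other with a step of $S$. $S$ is specialisation independent if whenever $Ds_1,Ds_2\in S$ and $Ds_2$ is a lowering of $Ds_1$ by $X$, $Ds_2$ is a congruent lowering of $Ds_1$ by $X$. A specialisation independent scheduling rule is a complete specialisation independent set of steps. $G\xrightarrow{S,M}R$ denotes a p-SLD derivation with template $M$ all of whose steps lie in $S$. Sub-resolvents and sub-templates: for a step $a|(F+G)\xrightarrow{c}Q=((F+G)+B\xi\underline{\pi})\alpha$, set $Q/a=B\xi\underline{\pi}\alpha$, $Q/F=F\alpha$, $Q/(a|F)=Q/a+Q/F$, $c/a=c$, $c/F=$ empty, $c/(a|F)=c$. For a derivation $F+G\xrightarrow{c}Q\xrightarrow{K}R$, recursively $R/F=R/(Q/F)$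 and $(c|K)/F=(c/F)|(K/(Q/F))$ (for the empty derivation, $R/F=F$ and the sub-template is empty). Thus $R/F$ is the set of p-atoms of $R$ descending from $F$ and $D/F$ is the subsequence of the template $D$ of clauses applied to p-atoms descending from $F$. *)

(* Defs.v *)
From mathcomp Require Import all_boot all_order all_algebra.
From Stdlib Require List.
Set Implicit Arguments. Unset Strict Implicit. Unset Printing Implicit Defensive.
Import Order.TTheory GRing.Theory Num.Theory.
Local Open Scope ring_scope.

Section PSLD.
Context {Fs Ps : Type}.

Inductive term : Type := Var of nat | Fun of Fs & seq term.

Definition atom := (Ps * seq term)%type.
Definition patom := (atom * rat)%type.
(* A p-goal is represented as the list of its p-atoms sorted by strictly
   increasing priority (hence pairwise distinct priorities). *)
Definition pgoal := seq patom.
Definition is_pgoal (G : pgoal) : Prop := sorted (fun x y : patom => x.2 < y.2) G.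

Definition subst := nat -> term.

Fixpoint tsubst (s : subst) (t : term) : term :=
  match t with Var x => s x | Fun f ts => Fun f (map (tsubst s) ts) end.
Fixpoint tvars (t : term) : seq nat :=
  match t with Var x => [:: x] | Fun f ts => flatten (map tvars ts) end.

Definition asubst (s : subst) (a : atom) : atom := (a.1, map (tsubst s) a.2).
Definition avars (a : atom) : seq nat := flatten (map tvars a.2).
Definition gsubst (s : subst) (G : pgoal) : pgoal := map (fun p => (asubst s p.1, p.2)) G.
Definition gvars (G : pgoal) : seq nat := flatten (map (fun p => avars p.1) G).
Definition gshift (pi : rat -> rat) (G : pgoal) : pgoal := map (fun p => (p.1, pi p.2)) G.

Definition finsubst (s : subst) : Prop := exists n, forall x, (n <= x)%N -> s x = Var x.
Definition renaming (s : subst) : Prop :=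
  exists f : nat -> nat, bijective f /\ (exists n, forall x, (n <= x)%N -> f x = x)
                         /\ forall x, s x = Var (f x).
Definition shifting (pi : rat -> rat) : Prop :=
  (forall x y, x < y -> pi x < pi y) /\ bijective pi.

(* merging F + G (meaningful when no common priority) *)
Definition pdisj (F G : pgoal) : Prop := forall x y, List.In x F -> List.In y G -> x.2 <> y.2.
Definition pmerge (F G : pgoal) : pgoal := path.merge (fun x y : patom => x.2 <= y.2) F G.

Definition is_unifier (th : subst) (a b : atom) : Prop := asubst th a = asubst th b.
Definition is_mgu (th : subst) (a b : atom) : Prop :=
  is_unifier th a b /\
  forall d, is_unifier d a b -> exists eta : subst, forall x, d x = tsubst eta (th x).
Definition idempotent (th : subst) : Prop := forall x, tsubst th (th x) = th x.
Definition relevant (th : subst) (a b : atom) : Prop :=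
  forall x, th x <> Var x ->
    (x \in avars a ++ avars b) /\ {subset tvars (th x) <= avars a ++ avars b}.

Definition clause := (atom * pgoal)%type.
Definition is_clause (c : clause) : Prop := is_pgoal c.2.
Definition cvars (c : clause) : seq nat := avars c.1 ++ gvars c.2.
Definition csubst (s : subst) (c : clause) : clause := (asubst s c.1, gsubst s c.2).

(* A step G --(c xi, theta)--> R, recorded with its shifting pi. *)
Record step := Step {
  st_goal : pgoal; st_clause : clause; st_ren : subst; st_mgu : subst; st_shift : rat -> rat }.

Definition is_step (d : step) : Prop :=
  match st_goal d with
  | [::] => False
  | a :: K =>
      is_pgoal (st_goal d) /\ is_clause (st_clause d) /\
      renaming (st_ren d) /\
      (forall x, x \in gvars (st_goal d) -> x \notin cvars (csubst (st_ren d) (st_clause d))) /\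
      is_mgu (st_mgu d) a.1 (asubst (st_ren d) (st_clause d).1) /\
      idempotent (st_mgu d) /\
      relevant (st_mgu d) a.1 (asubst (st_ren d) (st_clause d).1) /\
      shifting (st_shift d) /\
      pdisj K (gshift (st_shift d) (gsubst (st_ren d) (st_clause d).2))
  end.

Definition st_body (d : step) : pgoal :=
  gshift (st_shift d) (gsubst (st_ren d) (st_clause d).2).

Definition st_res (d : step) : pgoal :=
  match st_goal d with
  | [::] => [::]
  | a :: K => gsubst (st_mgu d) (pmerge K (st_body d))
  end.

(* p-SLD derivations: chains of steps, renamed clauses variable-disjoint from
   the initial goal and from all earlier renamed clauses *)
Fixpoint chain (G : pgoal) (ds : seq step) (R : pgoal) : Prop :=
  match ds with
  | [::] => R = G
  | d :: ds' => st_goal d = G /\ is_step d /\ chain (st_res d) ds' R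
  end.
Fixpoint fresh_chain (acc : seq nat) (ds : seq step) : Prop :=
  match ds with
  | [::] => True
  | d :: ds' =>
      let v := cvars (csubst (st_ren d) (st_clause d)) in
      (forall x, x \in v -> x \notin acc) /\ fresh_chain (acc ++ v) ds'
  end.
Definition psld (G : pgoal) (ds : seq step) (R : pgoal) : Prop :=
  is_pgoal G /\ chain G ds R /\ fresh_chain (gvars G) ds.
Definition template (ds : seq step) : seq clause := map st_clause ds.
Definition psld_via (S : step -> Prop) (G : pgoal) (ds : seq step) (R : pgoal) : Prop :=
  psld G ds R /\ (forall d, List.In d ds -> S d).

Definition lowering (X : pgoal) (d1 d2 : step) : Prop :=
  is_step d1 /\ is_step d2 /\ st_clause d2 = st_clause d1 /\
  exists a K, st_goal d1 = a :: K /\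
  exists (lam : subst) (sg : rat -> rat), finsubst lam /\ shifting sg /\
    pdisj (gshift sg (gsubst lam K)) X /\
    st_goal d2 = (asubst lam a.1, sg a.2) :: pmerge (gshift sg (gsubst lam K)) X.

Definition congr_lowering (X : pgoal) (d1 d2 : step) : Prop :=
  is_step d1 /\ is_step d2 /\ st_clause d2 = st_clause d1 /\
  exists a K, st_goal d1 = a :: K /\
  exists (lam : subst) (sg : rat -> rat), finsubst lam /\ shifting sg /\
    pdisj (gshift sg (gsubst lam K)) X /\
    st_goal d2 = (asubst lam a.1, sg a.2) :: pmerge (gshift sg (gsubst lam K)) X /\
    exists rho, shifting rho /\ gshift rho K = gshift sg K /\
      gshift rho (gshift (st_shift d1) (st_clause d1).2)
        = gshift (st_shift d2) (st_clause d1).2.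

Definition mutual_congr_lowering (d1 d2 : step) : Prop :=
  (exists X, congr_lowering X d1 d2) /\ (exists X, congr_lowering X d2 d1).

Definition complete (S : step -> Prop) : Prop :=
  (forall d, S d -> is_step d) /\
  (forall G c, (exists d, is_step d /\ st_goal d = G /\ st_clause d = c) ->
               exists d, S d /\ st_goal d = G /\ st_clause d = c) /\
  (forall d d', S d -> is_step d' -> mutual_congr_lowering d d' -> S d').

Definition spec_independent (S : step -> Prop) : Prop :=
  forall d1 d2 X, S d1 -> S d2 -> lowering X d1 d2 -> congr_lowering X d1 d2.

Definition si_scheduling_rule (S : step -> Prop) : Prop :=
  complete S /\ spec_independent S.

(* sub-resolvents and sub-templates, relationally: for a step with goal a::K
   and a sub-goal H of it, H' = Q/H. *)
Definition sub_step (d : step) (H H' : pgoal) : Prop :=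
  match st_goal d with
  | [::] => False
  | a :: K =>
      (exists F, H = a :: F /\
         H' = pmerge (gsubst (st_mgu d) (st_body d)) (gsubst (st_mgu d) F))
      \/ (~ List.In a H /\ H' = gsubst (st_mgu d) H)
  end.

Definition sub_clause (d : step) (H : pgoal) (M M' : seq clause) : Prop :=
  match st_goal d with
  | [::] => False
  | a :: K => (List.In a H /\ M = st_clause d :: M') \/ (~ List.In a H /\ M = M')
  end.

(* sub_res ds H R' :  R' = R/H  for the derivation with steps ds *)
Fixpoint sub_res (ds : seq step) (H R' : pgoal) : Prop :=
  match ds with
  | [::] => R' = H
  | d :: ds' => exists H', sub_step d H H' /\ sub_res ds' H' R'
  end.

(* sub_tmpl ds H M :  M = D/H  for the derivation with steps ds *)
Fixpoint sub_tmpl (ds : seq step) (H : pgoal) (M : seq clause) : Prop :=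
  match ds with
  | [::] => M = [::]
  | d :: ds' => exists H' M', sub_step d H H' /\ sub_tmpl ds' H' M' /\ sub_clause d H M M'
  end.

End PSLD.

(* Main.v *)
Require Import Defs.
From mathcomp Require Import all_boot all_order all_algebra.
From Stdlib Require Import Classical.
Set Implicit Arguments. Unset Strict Implicit. Unset Printing Implicit Defensive.
Import Order.TTheory GRing.Theory Num.Theory.
Local Open Scope ring_scope.

Section Aux.
Context {Fs Ps : Type}.
Local Notation term := (@term Fs).
Local Notation atom := (@atom Fs Ps).
Local Notation patom := (@patom Fs Ps).
Local Notation pgoal := (@pgoal Fs Ps).
Local Notation subst := (@subst Fs).

Definition term_ind' (P : term -> Prop) (HV : forall x, P (Var x))
  (HF : forall f ts, (forall t, List.In t ts -> P t) -> P (Fun f ts)) : forall t, P t :=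
  fix rec t := match t with
  | Var x => HV x
  | Fun f ts => HF f ts ((fix go (l : seq term) : forall u, List.In u l -> P u :=
        match l with
        | [::] => fun u H => match H with end
        | v :: l' => fun u H => match H with
                      | or_introl e => eq_ind v P (rec v) u e
                      | or_intror H' => go l' u H' end end) ts)
  end.

Lemma map_ext_In (A B : Type) (f g : A -> B) (l : seq A) :
  (forall x, List.In x l -> f x = g x) -> map f l = map g l.
Proof. elim: l => //= x l IH H; rewrite H ?IH //; auto. Qed.

Lemma In_map (A B : Type) (f : A -> B) (l : seq A) y :
  List.In y (map f l) -> exists x, List.In x l /\ y = f x.
Proof. elim: l => //= x l IH [<-|/IH [z [H1 H2]]]; eauto. Qed.

Lemma In_map2 (A B : Type) (f : A -> B) (l : seq A) x :
  List.In x l -> List.In (f x) (map f l).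
Proof. elim: l => //= z l IH [->|/IH]; auto. Qed.

Lemma in_flatten_In (A : Type) (h : A -> seq nat) (l : seq A) v :
  v \in flatten (map h l) -> exists u, List.In u l /\ v \in h u.
Proof.
elim: l => //= u l IH; rewrite mem_cat => /orP [H|/IH [w [H1 H2]]]; eauto.
Qed.

Lemma In_in_flatten (A : Type) (h : A -> seq nat) (l : seq A) u v :
  List.In u l -> v \in h u -> v \in flatten (map h l).
Proof.
elim: l => //= w l IH [->|H] Hv; rewrite mem_cat ?Hv //.
by rewrite IH ?orbT.
Qed.

Lemma tsubst_comp (s1 s2 : subst) t :
  tsubst s2 (tsubst s1 t) = tsubst (fun x => tsubst s2 (s1 x)) t.
Proof.
elim/term_ind': t => //= f ts IH; congr Fun; rewrite -map_comp.
by apply: map_ext_In => u Hu /=; rewrite IH.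
Qed.

Lemma tsubst_ext (s1 s2 : subst) t :
  (forall x, x \in tvars t -> s1 x = s2 x) -> tsubst s1 t = tsubst s2 t.
Proof.
elim/term_ind': t => /= [x H|f ts IH H]; first by apply: H; rewrite inE.
congr Fun; apply: map_ext_In => u Hu; apply: IH => // x Hx.
by apply: H; apply: In_in_flatten Hu Hx.
Qed.

Lemma tvars_tsubst (s : subst) t v :
  v \in tvars (tsubst s t) -> exists2 x, x \in tvars t & v \in tvars (s x).
Proof.
elim/term_ind': t => /= [x H|f ts IH H]; first by exists x; rewrite ?inE.
case: (in_flatten_In H) => u [Hu Hv]; case: (In_map Hu) => w [Hw E]; subst u.
case: (IH w Hw Hv) => x Hx Hvx; exists x => //; exact: In_in_flatten Hw Hx.
Qed.

Lemma tvars_tsubst_sub (s : subst) t x :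
  x \in tvars t -> {subset tvars (s x) <= tvars (tsubst s t)}.
Proof.
elim/term_ind': t => /= [y|f ts IH]; first by rewrite inE => /eqP ->.
move=> /in_flatten_In [u [Hu Hx]] v Hv.
apply: (In_in_flatten (In_map2 (tsubst s) Hu)); exact: IH Hx _ Hv.
Qed.

Lemma tsubst_fix (s : subst) t :
  tsubst s t = t -> forall x, x \in tvars t -> s x = Var x.
Proof.
move: t; apply: term_ind' => [y|f ts IH] /= H x; first by rewrite inE => /eqP ->.
case: H => H; move=> /in_flatten_In [u [Hu Hx]]; apply: (IH u Hu) => //.
elim: ts H Hu {IH Hx} => //= w ts IH2 [E1 E2] [<-|Hu] //; exact: IH2.
Qed.

Lemma asubst_comp (s1 s2 : subst) (a : atom) :
  asubst s2 (asubst s1 a) = asubst (fun x => tsubst s2 (s1 x)) a.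
Proof.
rewrite /asubst /=; congr pair; rewrite -map_comp; apply: map_ext_In => u _.
exact: tsubst_comp.
Qed.

Lemma asubst_ext (s1 s2 : subst) (a : atom) :
  (forall x, x \in avars a -> s1 x = s2 x) -> asubst s1 a = asubst s2 a.
Proof.
move=> H; rewrite /asubst; congr pair; apply: map_ext_In => u Hu.
apply: tsubst_ext => x Hx; apply: H; exact: In_in_flatten Hu Hx.
Qed.

Lemma avars_asubst (s : subst) (a : atom) v :
  v \in avars (asubst s a) -> exists2 x, x \in avars a & v \in tvars (s x).
Proof.
rewrite /avars /= => /in_flatten_In [u [Hu Hv]]; case: (In_map Hu) => w [Hw E]; subst u.
case: (tvars_tsubst Hv) => x Hx Hvx; exists x => //; exact: In_in_flatten Hw Hx.
Qed.

Lemma avars_asubst_sub (s : subst) (a : atom) x :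
  x \in avars a -> {subset tvars (s x) <= avars (asubst s a)}.
Proof.
move=> /in_flatten_In [u [Hu Hx]] v Hv; rewrite /avars /=.
apply: (In_in_flatten (In_map2 (tsubst s) Hu)); exact: tvars_tsubst_sub Hx _ Hv.
Qed.

Lemma gsubst_comp (s1 s2 : subst) (G : pgoal) :
  gsubst s2 (gsubst s1 G) = gsubst (fun x => tsubst s2 (s1 x)) G.
Proof.
rewrite /gsubst -map_comp; apply: map_ext_In => p _ /=; by rewrite asubst_comp.
Qed.

Lemma gsubst_ext (s1 s2 : subst) (G : pgoal) :
  (forall x, x \in gvars G -> s1 x = s2 x) -> gsubst s1 G = gsubst s2 G.
Proof.
move=> H; apply: map_ext_In => p Hp; rewrite (@asubst_ext s1 s2) // => x Hx.
apply: H; exact: (In_in_flatten (h := fun p : patom => avars p.1) Hp Hx).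
Qed.

Lemma gvars_gsubst (s : subst) (G : pgoal) v :
  v \in gvars (gsubst s G) -> exists2 x, x \in gvars G & v \in tvars (s x).
Proof.
rewrite /gvars /gsubst => /in_flatten_In [u [Hu Hv]]; case: (In_map Hu) => w [Hw E]; subst u.
case: (avars_asubst Hv) => x Hx Hvx; exists x => //.
exact: (In_in_flatten (h := fun p : patom => avars p.1) Hw Hx).
Qed.

Lemma gvars_gsubst_sub (s : subst) (G : pgoal) x :
  x \in gvars G -> {subset tvars (s x) <= gvars (gsubst s G)}.
Proof.
move=> /in_flatten_In [u [Hu Hx]] v Hv; rewrite /gvars /gsubst.
apply: (In_in_flatten (In_map2 (fun p : patom => (asubst s p.1, p.2)) Hu)).
exact: avars_asubst_sub Hx _ Hv.
Qed.

Lemma gvars_gshift r (G : pgoal) : gvars (gshift r G) = gvars G.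
Proof. by rewrite /gvars /gshift -map_comp. Qed.

Lemma gshift_gsubst r s (G : pgoal) : gshift r (gsubst s G) = gsubst s (gshift r G).
Proof. by rewrite /gshift /gsubst -!map_comp. Qed.

Lemma gshift_comp r1 r2 (G : pgoal) :
  gshift r2 (gshift r1 G) = gshift (r2 \o r1) G.
Proof. by rewrite /gshift -map_comp. Qed.

Lemma In_gsubst s (G : pgoal) x : List.In x (gsubst s G) -> exists y, List.In y G /\ x.2 = y.2.
Proof. move=> H; case: (In_map H) => y [Hy E]; subst x; by exists y. Qed.

Lemma In_gshift r (G : pgoal) x : List.In x (gshift r G) -> exists y, List.In y G /\ x.2 = r y.2.
Proof. move=> H; case: (In_map H) => y [Hy E]; subst x; by exists y. Qed.

End Aux.


Lemma merge_cons (T : Type) (leT : rel T) x s1 y s2 : merge leT (x::s1) (y::s2) =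
  if leT x y then x :: merge leT s1 (y::s2) else y :: merge leT (x::s1) s2.
Proof. by []. Qed.

Section Merge.
Context {T : Type} (leT : rel T).
Lemma merge_nil_r s : merge leT s [::] = s. Proof. by case: s. Qed.

Lemma In_merge s1 s2 x : List.In x (merge leT s1 s2) <-> List.In x s1 \/ List.In x s2.
Proof.
elim: s1 s2 => [|a s1 IH1] s2; first by split; [right|case].
elim: s2 => [|b s2 IH2]; first by rewrite merge_nil_r /=; tauto.
rewrite merge_cons; case: (leT a b) => /=.
- have := IH1 (b :: s2); simpl; tauto.
- move: IH2; simpl; tauto.
Qed.

Lemma merge_filter (p : pred T) s1 s2 :
  all p s1 -> all (predC p) s2 -> filter p (merge leT s1 s2) = s1.
Proof.
elim: s1 s2 => [|a s1 IH1] s2.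
  move=> _; elim: s2 => //= b s2 IH /andP [Hb Hs]; by rewrite (negbTE Hb) IH.
move=> /= /andP [Ha Hs1]; elim: s2 => [|b s2 IH2].
  by move=> _; rewrite merge_nil_r /= Ha; congr cons; exact/all_filterP.
move=> /andP [Hb Hs2]; rewrite merge_cons; case: (leT a b) => /=.
- by rewrite /= Ha IH1 //= ?(negbTE Hb) ?Hb ?Hs2.
- by rewrite (negbTE Hb) IH2.
Qed.

Lemma merge_map_gen (T' : Type) (leT' : rel T') (f : T -> T') s1 s2 :
  (forall x y, leT x y = leT' (f x) (f y)) ->
  map f (merge leT s1 s2) = merge leT' (map f s1) (map f s2).
Proof.
move=> H; elim: s1 s2 => [|a s1 IH1] s2 //.
elim: s2 => [|b s2 IH2]; first by rewrite !merge_nil_r.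
rewrite merge_cons /= -H; case: (leT a b) => /=.
- by rewrite IH1.
- by rewrite IH2.
Qed.
End Merge.

Lemma all_In (A : Type) (p : pred A) (l : seq A) :
  (forall x, List.In x l -> p x) -> all p l.
Proof. elim: l => //= x l IH H; rewrite H /= ?IH //; auto. Qed.

Lemma in_map_In (A : Type) (B : eqType) (f : A -> B) (l : seq A) r :
  r \in map f l -> exists y, List.In y l /\ r = f y.
Proof.
elim: l => //= y l IH; rewrite inE => /orP [/eqP ->|/IH [z [H1 H2]]]; eauto.
Qed.

Section PM.
Context {Fs Ps : Type}.
Local Notation patom := (@patom Fs Ps).
Local Notation pgoal := (@pgoal Fs Ps).
Local Notation subst := (@subst Fs).

Lemma pmerge_comm (A B : pgoal) : pdisj A B -> pmerge A B = pmerge B A.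
Proof.
rewrite /pmerge; elim: A B => [|a A IH1] B H; first by rewrite merge_nil_r.
elim: B H => [|b B IH2] H; first by rewrite merge_nil_r.
rewrite !merge_cons.
have Hab : a.2 <> b.2 by apply: H; left.
case: (lerP a.2 b.2) => Hle; case: (lerP b.2 a.2) => Hle2.
- by case: Hab; apply/eqP; rewrite eq_le Hle Hle2.
- rewrite IH1 // => x y Hx Hy; apply: H => //; by right.
- rewrite IH2 // => x y Hx Hy; apply: H => //; by right.
- by have := lt_trans Hle Hle2; rewrite ltxx.
Qed.

Lemma pmergeA (A B C : pgoal) : pmerge (pmerge A B) C = pmerge A (pmerge B C).
Proof.
rewrite /pmerge; symmetry; apply: (@mergeA _ (fun x y : patom => x.2 <= y.2)).
- by move=> x y; apply: le_total.
- by move=> y x z; apply: le_trans.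
Qed.

Lemma gsubst_pmerge (s : subst) (A B : pgoal) :
  gsubst s (pmerge A B) = pmerge (gsubst s A) (gsubst s B).
Proof. by rewrite /gsubst /pmerge; apply: merge_map_gen. Qed.

Lemma gshift_pmerge r (A B : pgoal) : shifting r ->
  gshift r (pmerge A B) = pmerge (gshift r A) (gshift r B).
Proof.
move=> [Hr _]; rewrite /gshift /pmerge; apply: merge_map_gen => x y /=.
by rewrite (le_mono Hr).
Qed.

Lemma In_pmerge (A B : pgoal) x : List.In x (pmerge A B) <-> List.In x A \/ List.In x B.
Proof. exact: In_merge. Qed.

Lemma gvars_pmerge (A B : pgoal) x : x \in gvars (pmerge A B) -> x \in gvars A \/ x \in gvars B.
Proof.
move=> /in_flatten_In [u [/In_pmerge [Hu|Hu] Hx]]; [left|right];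
  exact: (In_in_flatten (h := fun p : patom => avars p.1) Hu Hx).
Qed.

Lemma pdisj_sym (A B : pgoal) : pdisj A B -> pdisj B A.
Proof. by move=> H x y Hx Hy E; apply: (H y x Hy Hx); rewrite E. Qed.

Lemma pdisj_sub (A A' B B' : pgoal) : (forall x, List.In x A' -> List.In x A) ->
  (forall x, List.In x B' -> List.In x B) -> pdisj A B -> pdisj A' B'.
Proof. by move=> HA HB H x y Hx Hy; apply: H; auto. Qed.

Lemma pdisj_gsubst (s s' : subst) (A B : pgoal) : pdisj A B -> pdisj (gsubst s A) (gsubst s' B).
Proof.
move=> H x y /In_gsubst [x' [Hx ->]] /In_gsubst [y' [Hy ->]]; exact: H.
Qed.

Lemma pdisj_merge_l (A B C : pgoal) : pdisj A C -> pdisj B C -> pdisj (pmerge A B) C.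
Proof. by move=> H1 H2 x y /In_pmerge [Hx|Hx] Hy; [apply: H1|apply: H2]. Qed.

Lemma pdisj_merge_r (A B C : pgoal) : pdisj C A -> pdisj C B -> pdisj C (pmerge A B).
Proof. by move=> H1 H2 x y Hx /In_pmerge [Hy|Hy]; [apply: H1|apply: H2]. Qed.

Lemma pmerge_head_l (a : patom) (F Y K : pgoal) :
  pdisj (a :: F) Y -> pmerge (a :: F) Y = a :: K -> K = pmerge F Y.
Proof.
rewrite /pmerge; case: Y => [|y Y] H; first by rewrite !merge_nil_r => -[].
rewrite merge_cons; case: ifP => _ E.
  by case: E => ->.
case: E => E1 E2.
by exfalso; apply: (H a y); [left|left|rewrite E1].
Qed.

Lemma pmerge_head_r (a : patom) (H Y K : pgoal) :
  ~ List.In a H -> pmerge H Y = a :: K -> exists Y3, Y = a :: Y3 /\ K = pmerge H Y3.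
Proof.
rewrite /pmerge; case: H => [|h H] Hn.
  by move=> E; exists K; split.
case: Y => [|y Y]; first by rewrite merge_nil_r => -[E _]; case: Hn; left.
rewrite merge_cons; case: ifP => _ E; case: E => E1 E2.
  by case: Hn; left.
by exists Y; rewrite E1 E2.
Qed.

Lemma pmerge_keys (A A' Y : pgoal) : pmerge A Y = pmerge A' Y ->
  pdisj A Y -> pdisj A' Y -> map snd A = map snd A'.
Proof.
move=> E HA HA'.
have E2 := congr1 (map snd) E.
rewrite /pmerge !(merge_map_gen (leT' := fun x y : rat => x <= y) (f := snd)) // in E2.
have E3 := congr1 (filter (fun r => r \notin map snd Y)) E2.
have Hn : all (predC (fun r => r \notin map snd Y)) (map snd Y).
  by apply/allP => r Hr /=; rewrite negbK.
have Hp : forall B : pgoal, pdisj B Y -> all (fun r => r \notin map snd Y) (map snd B).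
  move=> B HB; rewrite all_map; apply: all_In => x Hx /=.
  by apply/negP => /in_map_In [y [Hy Ey]]; apply: (HB x y Hx Hy).
by rewrite !merge_filter ?Hp // in E3.
Qed.

Lemma gshift_keys (r1 r2 : rat -> rat) (s1 s2 : subst) (K : pgoal) :
  map snd (gshift r1 (gsubst s1 K)) = map snd (gshift r2 (gsubst s2 K)) ->
  gshift r1 K = gshift r2 K.
Proof. elim: K => //= p K IH [E1 E2]; by rewrite E1 IH. Qed.
End PM.


Definition tr (a b x : nat) : nat := if x == a then b else if x == b then a else x.

Lemma tr_invol a b : involutive (tr a b).
Proof.
move=> x; rewrite /tr.
case: (eqVneq x a) => [->|Hxa]; first by rewrite eqxx; case: eqVneq.
case: (eqVneq x b) => [->|Hxb]; first by rewrite eqxx.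
by rewrite (negbTE Hxa) (negbTE Hxb).
Qed.

Lemma extend_inj (W : seq nat) (k : nat -> nat) : {in W &, injective k} ->
  exists f, bijective f /\ (exists n, forall x, (n <= x)%N -> f x = x) /\
            {in W, forall x, f x = k x}.
Proof.
elim: W => [|w W IH] Hk.
  by exists id; split; [exists id|split; [exists 0%N|]].
have Hk' : {in W &, injective k}.
  by move=> x y Hx Hy; apply: Hk; rewrite inE ?Hx ?Hy orbT.
case: (IH Hk') => f [Hf [[n Hn] HW]].
case: (boolP (w \in W)) => HwW.
  exists f; split => //; split; first by exists n.
  by move=> x; rewrite inE => /orP [/eqP ->|]; apply: HW.
exists (tr (f w) (k w) \o f); split; first exact: bij_comp (inv_bij (tr_invol _ _)) Hf.
split.
  exists (maxn n (maxn (f w) (k w)).+1) => x; rewrite geq_max => /andP [H1 H2].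
  rewrite /= (Hn x) // /tr.
  have N1 : x != f w by apply/eqP => E; move: H2; rewrite E ltnNge leq_maxl.
  have N2 : x != k w by apply/eqP => E; move: H2; rewrite E ltnNge leq_maxr.
  by rewrite (negbTE N1) (negbTE N2).
move=> x; rewrite inE => /orP [/eqP ->|Hx] /=; first by rewrite /tr eqxx.
rewrite (HW x Hx) /tr.
have Hxw : x != w by apply/eqP => E; move: Hx; rewrite E (negbTE HwW).
have E1 : k x != f w.
  apply/eqP => E; rewrite -HW // in E.
  have := bij_inj Hf E => E'; by rewrite E' eqxx in Hxw.
have E2 : k x != k w.
  apply/eqP => E; have := Hk x w; rewrite !inE eqxx Hx orbT /= => /(_ isT isT E) E'.
  by rewrite E' eqxx in Hxw.
by rewrite (negbTE E1) (negbTE E2).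
Qed.

Lemma mem_le_sumn (x : nat) (L : seq nat) : x \in L -> (x <= sumn L)%N.
Proof.
elim: L => //= y L IH; rewrite inE => /orP [/eqP ->|/IH H]; first exact: leq_addr.
exact: leq_trans H (leq_addl _ _).
Qed.

Section Ren.
Context {Fs Ps : Type}.
Local Notation term := (@term Fs).
Local Notation atom := (@atom Fs Ps).
Local Notation patom := (@patom Fs Ps).
Local Notation pgoal := (@pgoal Fs Ps).
Local Notation subst := (@subst Fs).
Local Notation clause := (@clause Fs Ps).

Lemma relevant_fin (th : subst) (a b : atom) : relevant th a b ->
  exists n, forall x, (n <= x)%N -> th x = Var x.
Proof.
move=> H; exists (sumn (avars a ++ avars b)).+1 => x Hx.
apply: NNPP => Hne; have [Hin _] := H x Hne.
by move: Hx; rewrite ltnNge (mem_le_sumn Hin).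
Qed.

Lemma finsubst_comp (s1 s2 : subst) : finsubst s1 ->
  (exists n, forall x, (n <= x)%N -> s2 x = Var x) ->
  finsubst (fun x => tsubst s2 (s1 x)).
Proof.
move=> [n1 H1] [n2 H2]; exists (maxn n1 n2) => x; rewrite geq_max => /andP [h1 h2].
by rewrite H1 //= H2.
Qed.

Lemma renaming_fin (s : subst) : renaming s -> finsubst s.
Proof. by move=> [f [_ [[n Hn] Hs]]]; exists n => x Hx; rewrite Hs Hn. Qed.

Lemma ren_cvars (s : subst) (f : nat -> nat) (c : clause) y :
  (forall x, s x = Var (f x)) -> y \in cvars c -> f y \in cvars (csubst s c).
Proof.
move=> Hs; rewrite /cvars /csubst /= !mem_cat => /orP [H|H].
  by rewrite (avars_asubst_sub H) // Hs inE.
by rewrite (gvars_gsubst_sub H) ?orbT // Hs inE.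
Qed.

Lemma ren_cvars_inv (s : subst) (f : nat -> nat) (c : clause) v :
  (forall x, s x = Var (f x)) -> v \in cvars (csubst s c) -> exists2 y, y \in cvars c & v = f y.
Proof.
move=> Hs; rewrite /cvars /csubst /= !mem_cat => /orP [H|H].
  case: (avars_asubst H) => y Hy; rewrite Hs inE => /eqP ->.
  by exists y => //; rewrite mem_cat Hy.
case: (gvars_gsubst H) => y Hy; rewrite Hs inE => /eqP ->.
by exists y => //; rewrite mem_cat Hy orbT.
Qed.

Lemma cvars_sub_a (c : clause) : {subset avars c.1 <= cvars c}.
Proof. by move=> x Hx; rewrite /cvars mem_cat Hx. Qed.
Lemma cvars_sub_g (c : clause) : {subset gvars c.2 <= cvars c}.
Proof. by move=> x Hx; rewrite /cvars mem_cat Hx orbT. Qed.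

End Ren.


Section StepSubst.
Context {Fs Ps : Type}.
Local Notation term := (@term Fs).
Local Notation atom := (@atom Fs Ps).
Local Notation patom := (@patom Fs Ps).
Local Notation pgoal := (@pgoal Fs Ps).
Local Notation subst := (@subst Fs).
Local Notation clause := (@clause Fs Ps).

Lemma step_subst (a : atom) (K : pgoal) (c : clause) (xi1 xi2 th1 th2 sig : subst)
    (pi1 : rat -> rat) :
  renaming xi1 -> renaming xi2 ->
  (forall x, x \in avars a ++ gvars K -> x \notin cvars (csubst xi1 c)) ->
  (forall x, x \in avars (asubst sig a) ++ gvars (gsubst sig K) -> x \notin cvars (csubst xi2 c)) ->
  is_mgu th1 a (asubst xi1 c.1) -> is_mgu th2 (asubst sig a) (asubst xi2 c.1) ->
  exists sig1, finsubst sig1 /\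
    gsubst sig1 (gsubst th1 (pmerge K (gshift pi1 (gsubst xi1 c.2)))) =
    gsubst th2 (pmerge (gsubst sig K) (gshift pi1 (gsubst xi2 c.2))) /\
    (renaming sig -> renaming sig1).
Proof.
move=> [f1 [Bf1 [_ Hx1]]] [f2 [Bf2 [_ Hx2]]] D1 D2 [U1 M1] [U2 M2].
case: (Bf1) => g1 c1 c2.
pose C := cvars c.
pose del x := if g1 x \in C then Var (f2 (g1 x)) : term else sig x.
have Hd1 : forall y, y \in C -> del (f1 y) = Var (f2 y).
  by move=> y Hy; rewrite /del c1 Hy.
have Hd2 : forall x, x \in avars a ++ gvars K -> del x = sig x.
  move=> x Hx; rewrite /del; case: ifP => // HC.
  have := ren_cvars Hx1 HC; rewrite c2 => H.
  by have := D1 x Hx; rewrite H.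
have Ea : asubst del a = asubst sig a.
  by apply: asubst_ext => x Hx; apply: Hd2; rewrite mem_cat Hx.
have EK : gsubst del K = gsubst sig K.
  by apply: gsubst_ext => x Hx; apply: Hd2; rewrite mem_cat Hx orbT.
have Eh : asubst del (asubst xi1 c.1) = asubst xi2 c.1.
  rewrite asubst_comp; apply: asubst_ext => y Hy.
  by rewrite Hx1 /= Hd1 ?Hx2 //; apply: cvars_sub_a.
have EB : gsubst del (gsubst xi1 c.2) = gsubst xi2 c.2.
  rewrite gsubst_comp; apply: gsubst_ext => y Hy.
  by rewrite Hx1 /= Hd1 ?Hx2 //; apply: cvars_sub_g.
pose mu x := tsubst th2 (del x).
have Umu : is_unifier mu a (asubst xi1 c.1).
  by rewrite /is_unifier /mu -!asubst_comp Ea Eh.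
case: (M1 mu Umu) => eta Heta.
pose L := pmerge K (gshift pi1 (gsubst xi1 c.2)).
have Emain : gsubst eta (gsubst th1 L) =
    gsubst th2 (pmerge (gsubst sig K) (gshift pi1 (gsubst xi2 c.2))).
  rewrite gsubst_comp (gsubst_ext (s2 := mu)) => [|x _]; last by rewrite Heta.
  by rewrite /mu /L -gsubst_comp gsubst_pmerge EK -gshift_gsubst EB.
pose W := gvars (gsubst th1 L).
case: (classic (renaming sig)) => Hsig; last first.
  exists (fun x => if x \in W then eta x else Var x); split.
    exists (sumn W).+1 => x Hx; case: ifP => // HW.
    by move: Hx; rewrite ltnNge (mem_le_sumn HW).
  split => //; rewrite -Emain; apply: gsubst_ext => x Hx.
  by rewrite /W Hx.
case: (Hsig) => g [Bg [_ Hg]].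
pose h x := if g1 x \in C then f2 (g1 x) else g x.
have Hdh : forall x, del x = Var (h x).
  by move=> x; rewrite /del /h; case: ifP.
pose V := avars a ++ gvars K ++ cvars (csubst xi1 c).
have HV1 : forall x, x \in avars a ++ gvars K ->
    h x \in avars (asubst sig a) ++ gvars (gsubst sig K) /\ h x = g x.
  move=> x Hx; have E : h x = g x.
    by have := Hd2 x Hx; rewrite Hdh Hg => -[].
  split=> //; rewrite E; move: Hx; rewrite !mem_cat => /orP [H|H].
    by rewrite (avars_asubst_sub H) // Hg inE.
  by rewrite (gvars_gsubst_sub H) ?orbT // Hg inE.
have HV2 : forall x, x \in cvars (csubst xi1 c) ->
    h x \in cvars (csubst xi2 c) /\ exists2 y, y \in C & x = f1 y /\ h x = f2 y.
  move=> x Hx; case: (ren_cvars_inv Hx1 Hx) => y Hy Ey.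
  have E : h x = f2 y by have := Hd1 y Hy; rewrite -Ey Hdh => -[].
  split; last by exists y.
  by rewrite E; apply: ren_cvars.
have hinj : {in V &, injective h}.
  move=> x x'; rewrite /V catA !(mem_cat _ (_ ++ _)) => /orP [Hx|Hx] /orP [Hx'|Hx'] E.
  - case: (HV1 x Hx) => _ E1; case: (HV1 x' Hx') => _ E2.
    by apply: (bij_inj Bg); rewrite -E1 -E2.
  - case: (HV1 x Hx) => H1 _; case: (HV2 x' Hx') => H2 _.
    by have := D2 _ H1; rewrite E H2.
  - case: (HV1 x' Hx') => H1 _; case: (HV2 x Hx) => H2 _.
    by have := D2 _ H1; rewrite -E H2.
  - case: (HV2 x Hx) => _ [y Hy [Ex E1]]; case: (HV2 x' Hx') => _ [y' Hy' [Ex' E2]].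
    subst x x'; suff -> : y = y' by [].
    by apply: (bij_inj Bf2); rewrite -E1 -E2.
pose h' y := nth y V (find (fun x => h x == y) V).
have Hh' : forall x, x \in V -> h' (h x) = x.
  move=> x Hx; have Hhas : has (fun z => h z == h x) V by apply/hasP; exists x.
  have /eqP E := nth_find (h x) Hhas.
  apply: hinj E => //; apply: mem_nth; by rewrite -has_find.
pose kap y := th1 (h' y).
have Ka : forall b : atom, {subset avars b <= V} -> asubst kap (asubst del b) = asubst th1 b.
  move=> b Hb; rewrite asubst_comp; apply: asubst_ext => x Hx.
  by rewrite Hdh /= /kap Hh' //; apply: Hb.
have Ukap : is_unifier kap (asubst sig a) (asubst xi2 c.1).
  rewrite /is_unifier -Ea -Eh !Ka //;
    by move=> x Hx; rewrite /V /cvars /csubst /= !mem_cat Hx ?orbT.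
case: (M2 kap Ukap) => eta2 Heta2.
have Hfix : forall x, x \in V -> tsubst (fun y => tsubst eta2 (eta y)) (th1 x) = th1 x.
  move=> x Hx; rewrite -tsubst_comp -Heta /mu Hdh /= -Heta2 /kap Hh' //.
have HLV : {subset gvars L <= V}.
  move=> x /gvars_pmerge [H|H]; first by rewrite /V !mem_cat H orbT.
  rewrite gvars_gshift in H.
  by rewrite /V /cvars /csubst /= !mem_cat H !orbT.
have HW : forall v, v \in W -> tsubst eta2 (eta v) = Var v.
  move=> v /gvars_gsubst [x Hx Hv].
  exact: (tsubst_fix (Hfix x (HLV x Hx)) Hv).
pose k v := if eta v is Var w then w else v.
have Hk : forall v, v \in W -> eta v = Var (k v).
  move=> v Hv; have := HW v Hv; rewrite /k; by case: (eta v).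
have kinj : {in W &, injective k}.
  move=> v v' Hv Hv' E.
  have := HW v Hv; have := HW v' Hv'; rewrite (Hk v Hv) (Hk v' Hv') E /= => -> [->] //.
case: (extend_inj kinj) => F [BF [HF HFW]].
exists (fun x => Var (F x)).
have RF : renaming (fun x => Var (F x)) by exists F.
split; first exact: renaming_fin.
split => //; rewrite -Emain; apply: gsubst_ext => v Hv.
by rewrite Hk // HFW.
Qed.

End StepSubst.


Section Main.
Context {Fs Ps : Type}.
Local Notation term := (@term Fs).
Local Notation atom := (@atom Fs Ps).
Local Notation patom := (@patom Fs Ps).
Local Notation pgoal := (@pgoal Fs Ps).
Local Notation subst := (@subst Fs).
Local Notation clause := (@clause Fs Ps).
Local Notation step := (@step Fs Ps).

Lemma gvars_pmerge_l (A B : pgoal) x : x \in gvars A -> x \in gvars (pmerge A B).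
Proof.
move=> /in_flatten_In [u [Hu Hx]].
apply: (In_in_flatten (h := fun p : patom => avars p.1) _ Hx).
by apply/In_pmerge; left.
Qed.

Lemma main_ind (S : step -> Prop) : si_scheduling_rule S ->
  forall (ds2 ds1 : seq step) (Qi Q R Hi Yi : pgoal) (sig : subst) (rho : rat -> rat),
  finsubst sig -> shifting rho ->
  Hi = gshift rho (gsubst sig Qi) ->
  pdisj Hi Yi ->
  chain Qi ds1 Q -> (forall d, List.In d ds1 -> S d) ->
  chain (pmerge Hi Yi) ds2 R -> (forall d, List.In d ds2 -> S d) ->
  sub_tmpl ds2 Hi (template ds1) ->
  exists sig' rho', finsubst sig' /\ shifting rho' /\
    sub_res ds2 Hi (gshift rho' (gsubst sig' Q)) /\
    (renaming sig -> sub_tmpl ds2 Yi [::] -> renaming sig').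
Proof.
move=> [[SS [_ _]] SI]; elim=> [|d2 ds2 IH] ds1 Qi Q R Hi Yi sig rho Fsig Srho EH Dj C1 S1 C2 S2 T.
  move: T => /= T; case: ds1 T C1 {S1} => [|d1 ds1] //= _ C1; subst Q.
  by exists sig, rho; split; [|split; [|split; [rewrite EH|]]].
case: C2 => G2 [St2 C2].
case: T => H' [M' [SS2 [T' SC]]].
have Sd2 : S d2 by apply: S2; left.
have S2' : forall d, List.In d ds2 -> S d by move=> d Hd; apply: S2; right.
have SS2c := SS2.
have St2u := St2.
rewrite /is_step in St2u; rewrite /sub_step in SS2; rewrite /sub_clause in SC.
rewrite /st_res in C2.
case E2 : (st_goal d2) G2 St2u SS2 SC C2 => [|a K2] // G2 St2u SS2 SC C2.
case: St2u => _ [_ [Rx2 [Dx2 [Mg2 [_ [Rel2 [Sh2 Pd2]]]]]]].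
case: SS2 => [[F [EHi EH']]|[NIn EH']].
- (* selected atom from the G-part *)
  case: SC => [[_ EM]|[NIn _]]; last by case: NIn; rewrite EHi; left.
  case: ds1 EM C1 S1 => [|d1 ds1] // [Ec EM] [G1 [St1 C1]] S1.
  have Sd1 : S d1 by apply: S1; left.
  have S1' : forall d, List.In d ds1 -> S d by move=> d Hd; apply: S1; right.
  case: Qi EH G1 => [|a1 K] EH G1; first by rewrite EH in EHi.
  rewrite EHi /= in EH; case: EH => Ea EF.
  rewrite EHi in G2 Dj.
  have EK2 := pmerge_head_l Dj (esym G2).
  have DjF : pdisj F Yi by apply: pdisj_sub Dj => // x Hx; right.
  have Low : lowering Yi d1 d2.
    split => //; split => //; split; first by rewrite Ec.
    exists a1, K; split => //; exists sig, rho; split => //; split => //.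
    by rewrite -EF; split => //; rewrite E2 EK2 Ea.
  have := SI d1 d2 Yi Sd1 Sd2 Low.
  move=> [_ [_ [_ [a' [K' [Eg1 [lam' [sg' [_ [_ [Pd' [Eg2 [rho' [Srho' [EK' EB']]]]]]]]]]]]]]].
  rewrite G1 in Eg1; case: Eg1 => Ea' EK'0; subst a' K'.
  rewrite E2 in Eg2; case: Eg2 => _ EK2'.
  have Ekeys : gshift rho K = gshift sg' K.
    apply: (gshift_keys (s1 := sig) (s2 := lam')); rewrite -EF.
    by apply: pmerge_keys Pd' => //; rewrite -EK2 -EK2'.
  rewrite -Ekeys in EK'.
  have St1u := St1; rewrite /is_step G1 in St1u.
  case: St1u => _ [_ [Rx1 [Dx1 [Mg1 _]]]].
  rewrite Ec in Rx1 Dx1 Mg1 EB'.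
  have D2' : forall x, x \in avars (asubst sig a1.1) ++ gvars (gsubst sig K) ->
      x \notin cvars (csubst (st_ren d2) (st_clause d2)).
    move=> x Hx; apply: Dx2; rewrite Ea.
    change (x \in avars (asubst sig a1.1) ++ gvars K2); rewrite mem_cat.
    move: Hx; rewrite mem_cat => /orP [->//|Hx]; apply/orP; right.
    by rewrite EK2; apply: gvars_pmerge_l; rewrite EF gvars_gshift.
  rewrite Ea /= in Mg2.
  case: (step_subst (st_shift d1) Rx1 Rx2 Dx1 D2' Mg1 Mg2) => sig1 [Fs1 [Eq1 Rn1]].
  set th2 := st_mgu d2 in EH' C2 Eq1 *.
  set body2 := st_body d2 in EH' Pd2 C2 *.
  have DFb : pdisj F body2.
    by apply: pdisj_sub Pd2 => // x Hx; rewrite EK2; apply/In_pmerge; left.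
  have DYb : pdisj Yi body2.
    by apply: pdisj_sub Pd2 => // x Hx; rewrite EK2; apply/In_pmerge; right.
  have HH : gshift rho' (gsubst sig1 (st_res d1)) = H'.
    rewrite /st_res G1 /st_body Ec Eq1 gshift_gsubst gshift_pmerge //.
    rewrite (gshift_gsubst rho' sig K) EK' -gshift_gsubst -EF.
    rewrite (gshift_gsubst (st_shift d1)) gshift_gsubst EB' -gshift_gsubst.
    rewrite EH' gsubst_pmerge pmerge_comm //; exact: pdisj_gsubst.
  have Dj' : pdisj H' (gsubst th2 Yi).
    rewrite EH'; apply: pdisj_merge_l; apply: pdisj_gsubst => //; exact: pdisj_sym.
  have Ch : pmerge H' (gsubst th2 Yi) = gsubst th2 (pmerge K2 body2).
    rewrite EH' -!gsubst_pmerge EK2; congr gsubst.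
    rewrite (pmerge_comm (A := body2)); last exact: pdisj_sym.
    rewrite pmergeA (pmerge_comm (A := body2)); last exact: pdisj_sym.
    by rewrite -pmergeA.
  have := IH ds1 (st_res d1) Q R H' (gsubst th2 Yi) sig1 rho' Fs1 Srho' (esym HH) Dj'
             C1 S1' _ S2' _.
  rewrite Ch EM => /(_ C2 T') [sig'' [rho'' [F'' [S'' [SR Rn]]]]].
  exists sig'', rho''; split => //; split => //; split.
    by exists H'; split.
  move=> Rs /= [Y'' [M'' [SY [TY SCY]]]].
  rewrite /sub_step /sub_clause E2 in SY SCY.
  have NInY : ~ List.In a Yi by move=> Hin; apply: (Dj a a) => //; left.
  case: SCY => [[Hin _]|[_ EM'']]; first by case: NInY.
  case: SY => [[F' [EY _]]|[_ EY]]; first by case: NInY; rewrite EY; left.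
  by apply: Rn; [apply: Rn1|rewrite -EY EM''].
- (* selected atom from the X-part *)
  case: SC => [[Hin _]|[_ EM]]; first by case: NIn.
  case: (pmerge_head_r NIn (esym G2)) => Y3 [EY EK2].
  set th2 := st_mgu d2 in EH' C2 *.
  set body2 := st_body d2 in Pd2 C2 *.
  pose sig1 x := tsubst th2 (sig x).
  have Fs1 : finsubst sig1 by apply: finsubst_comp => //; exact: relevant_fin Rel2.
  have HH : H' = gshift rho (gsubst sig1 Qi).
    by rewrite EH' EH -gshift_gsubst gsubst_comp.
  have DHb : pdisj Hi body2.
    by apply: pdisj_sub Pd2 => // x Hx; rewrite EK2; apply/In_pmerge; left.
  have DHY : pdisj Hi Y3 by apply: pdisj_sub Dj => // x Hx; rewrite EY; right.
  have Dj' : pdisj H' (gsubst th2 (pmerge Y3 body2)).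
    rewrite EH'; apply: pdisj_gsubst; exact: pdisj_merge_r.
  have Ch : pmerge H' (gsubst th2 (pmerge Y3 body2)) = gsubst th2 (pmerge K2 body2).
    by rewrite EH' -gsubst_pmerge EK2 pmergeA.
  have := IH ds1 Qi Q R H' (gsubst th2 (pmerge Y3 body2)) sig1 rho Fs1 Srho HH Dj'
             C1 S1 _ S2' _.
  rewrite Ch EM => /(_ C2 T') [sig'' [rho'' [F'' [S'' [SR Rn]]]]].
  exists sig'', rho''; split => //; split => //; split.
    by exists H'; split.
  move=> Rs /= [Y'' [M'' [SY [TY SCY]]]].
  rewrite /sub_clause E2 in SCY.
  case: SCY => [[_ Ebad]|[NIn' _]] //.
  by case: NIn'; rewrite EY; left.
Qed.

End Main.

Theorem lemmaL3p1p1 (Fs Ps : Type) (S : @step Fs Ps -> Prop)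
    (G X : @pgoal Fs Ps) (gam : @subst Fs) (tau : rat -> rat)
    (ds1 ds2 : seq (@step Fs Ps)) (Q R : @pgoal Fs Ps) :
  si_scheduling_rule S ->
  is_pgoal G -> is_pgoal X -> finsubst gam -> shifting tau ->
  pdisj (gshift tau (gsubst gam G)) X ->
  psld_via S G ds1 Q ->
  psld_via S (pmerge (gshift tau (gsubst gam G)) X) ds2 R ->
  sub_tmpl ds2 (gshift tau (gsubst gam G)) (template ds1) ->
  exists (sig : @subst Fs) (rho : rat -> rat),
    finsubst sig /\ shifting rho /\
    sub_res ds2 (gshift tau (gsubst gam G)) (gshift rho (gsubst sig Q)) /\
    (renaming gam -> sub_tmpl ds2 X [::] -> renaming sig).
Proof.
move=> HS _ _ Fg St Dj [[_ [C1 _]] S1] [[_ [C2 _]] S2] T.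
exact: (main_ind HS Fg St erefl Dj C1 S1 C2 S2 T).
Qed.
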